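(* Let $n_1>n_2>n_3\geq 2$ be integers. Let $X$ be the set of the following vectors of length $4$: $(j,j,j,0),(j,j,j,1)$ for $j\in\{1,\ldots,n_3\}$; $(n_3+k,n_3+k,1,0),(n_3+k,n_3+k,n_3,1)$ for $k\in\{0,\ldots,n_2-n_3-1\}$; $(n_2+k,1,1,0),(n_2+k,n_2,n_3,1)$ for $k\in\{0,\ldots,n_1-n_2-1\}$; and $(n_1,n_2,n_3,1)$. Let $\mathcal B$ consist of all $3$-element subsets $\{\alpha_1,\alpha_2,\alpha_3\}\subseteq X$ such that for each coordinate $j\in\{1,2,3,4\}$ the set $\{\alpha_{1(j)},\alpha_{2(j)},\alpha_{3(j)}\}$ has exactly $2$ elements, together with the additional triple $\{(1,1,1,0),(n_3,n_3,1,0),(n_3,n_3,n_3,0)\}$. Then the $3$-uniform bi-hypergraph $\mathcal H_{n_1,n_2,n_3}=(X,\mathcal B)$ is a one-realization of $\{n_1,n_2,n_3\}$.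
   Context: A bi-hypergraph $(X,\mathcal B)$ is a mixed hypergraph whose $\mathcal C$-edges and $\mathcal D$-edges both equal $\mathcal B$. A strict $k$-coloring is a partition of $X$ into exactly $k$ nonempty classes such that every edge of $\mathcal B$ contains two vertices of a common class and two vertices of distinct classes. The feasible set is the set of $k$ admitting a strict $k$-coloring; the chromatic spectrum lists, for $k=1,\ldots,\max$ of the feasible set, the number of strict $k$-colorings (as partitions). A one-realization of a set $S$ is a mixed hypergraph whose feasible set is $S$ and whose chromatic spectrum has all entries in $\{0,1\}$. $\alpha_{l(j)}$ denotes the $j$-th entry of $\alpha_l$. *)

(* Defs.v *)
From mathcomp Require Import all_boot.
Set Implicit Arguments. Unset Strict Implicit. Unset Printing Implicit Defensive.

Section BiHypergraph.
Variable T : finType.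

(* A strict coloring of the bi-hypergraph (X, B), viewed as a partition P of X
   into nonempty classes: every edge contains two distinct vertices in a common
   class (C-edge condition) and two vertices in distinct classes (D-edge). *)
Definition strict_coloring (X : {set T}) (B : {set {set T}}) (P : {set {set T}}) : bool :=
  partition P X &&
  [forall E in B,
     [exists x in E, exists y in E, (x != y) && (pblock P x == pblock P y)] &&
     [exists x in E, exists y in E, pblock P x != pblock P y]].

Definition num_strict_colorings (X : {set T}) (B : {set {set T}}) (k : nat) : nat :=
  #|[set P : {set {set T}} | strict_coloring X B P && (#|P| == k)]|.

Definition one_realization (X : {set T}) (B : {set {set T}}) (S : seq nat) : Prop :=
  (forall k, (0 < num_strict_colorings X B k) = (k \in S)) /\
  (forall k, num_strict_colorings X B k <= 1).
End BiHypergraph.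

Definition vec4 (n : nat) := {ffun 'I_4 -> 'I_n.+1}.

Definition mkv (n : nat) (s : seq nat) : vec4 n :=
  [ffun i : 'I_4 => inord (nth 0 s i)].

Definition Xlist (n1 n2 n3 : nat) : seq (seq nat) :=
  [seq [:: j; j; j; 0] | j <- iota 1 n3] ++
  [seq [:: j; j; j; 1] | j <- iota 1 n3] ++
  [seq [:: n3 + k; n3 + k; 1; 0] | k <- iota 0 (n2 - n3)] ++
  [seq [:: n3 + k; n3 + k; n3; 1] | k <- iota 0 (n2 - n3)] ++
  [seq [:: n2 + k; 1; 1; 0] | k <- iota 0 (n1 - n2)] ++
  [seq [:: n2 + k; n2; n3; 1] | k <- iota 0 (n1 - n2)] ++
  [:: [:: n1; n2; n3; 1]].

Definition Hvert (n1 n2 n3 : nat) : {set vec4 n1} :=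
  [set x | x \in map (mkv n1) (Xlist n1 n2 n3)].

Definition Hedges (n1 n2 n3 : nat) : {set {set vec4 n1}} :=
  [set E : {set vec4 n1} | (E \subset Hvert n1 n2 n3) && (#|E| == 3) &&
     [forall j : 'I_4, #|[set (x : vec4 n1) j | x in E]| == 2]]
  :|: [set [set mkv n1 [:: 1; 1; 1; 0]; mkv n1 [:: n3; n3; 1; 0];
               mkv n1 [:: n3; n3; n3; 0]]].

(* Main.v *)
Require Import Defs.
From mathcomp Require Import all_boot zify.
Set Implicit Arguments. Unset Strict Implicit. Unset Printing Implicit Defensive.

Definition tv {T : eqType} (x y z : T) : bool := ((x == y) + (y == z) + (x == z) == 1)%N.

Definition qok3 (u v w : seq nat) : bool :=
  all (fun c => tv (nth 0 u c) (nth 0 v c) (nth 0 w c)) (iota 0 4).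

Definition medges (vs : seq (seq nat)) : seq (nat * nat * nat) :=
  (1, 3, 4) :: [seq e <- [seq (ij.1, ij.2, l) | ij <- [seq (i, j) | i <- iota 0 (size vs), j <- iota 0 (size vs)], l <- iota 0 (size vs)]
   | (e.1.1 < e.1.2 < e.2) && qok3 (nth [::] vs e.1.1) (nth [::] vs e.1.2) (nth [::] vs e.2)].

Definition colok (f : seq nat) (e : nat * nat * nat) : bool :=
  tv (nth 0 f e.1.1) (nth 0 f e.1.2) (nth 0 f e.2).

Definition emax (e : nat * nat * nat) := maxn e.1.1 (maxn e.1.2 e.2).

Definition pok (E : seq (nat * nat * nat)) (f : seq nat) : bool :=
  all (fun e => (emax e < size f) ==> colok f e) E.

Fixpoint ext (E : seq (nat * nat * nat)) (fuel : nat) (acc : seq nat) : seq (seq nat) :=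
  if fuel is fuel'.+1 then
    flatten [seq (if pok E (rcons acc c) then ext E fuel' (rcons acc c) else [::])
            | c <- size acc :: [seq j <- iota 0 (size acc) | nth 0 acc j == j]]
  else [:: acc].

Definition m0f (f : seq nat) : nat :=
  if nth 0 f 1 == nth 0 f 3 then 2 else if nth 0 f 5 == nth 0 f 7 then 1 else 0.

Definition iskern (vs : seq (seq nat)) (f : seq nat) (m : nat) : bool :=
  all (fun i => all (fun l => (nth 0 f i == nth 0 f l) ==
     (nth 0 (nth [::] vs i) m == nth 0 (nth [::] vs l) m)) (iota 0 (size vs))) (iota 0 (size vs)).

Definition K8 : seq (seq nat) :=
  [:: [:: 0;0;0;1]; [:: 0;0;0;0]; [:: 1;1;1;1]; [:: 1;1;0;0]; [:: 1;1;1;0];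
      [:: 2;2;1;1]; [:: 2;0;0;0]; [:: 3;2;1;1]].

Definition cfg_check (vs : seq (seq nat)) : bool :=
  (take 8 vs == K8) &&
  all (fun f => iskern vs f (m0f f)) (ext (medges vs) (size vs) [::]).

Inductive cls := CI | CII | CIII.
Definition PQ (c : cls) (x : nat) : seq (seq nat) :=
  match c with
  | CI => [:: [:: x;x;x;1]; [:: x;x;x;0]]
  | CII => [:: [:: x;x;1;1]; [:: x;x;0;0]]
  | CIII => [:: [:: x;2;1;1]; [:: x;0;0;0]]
  end.

Lemma chk0 : cfg_check K8. Proof. vm_compute. reflexivity. Qed.
Lemma chk1 c : cfg_check (K8 ++ PQ c 4). Proof. case: c; vm_compute; reflexivity. Qed.
Lemma chk2 c d : cfg_check (K8 ++ PQ c 4 ++ PQ d 5). Proof. case: c; case: d; vm_compute; reflexivity. Qed.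

Lemma mkseqS' (f : nat -> nat) n : mkseq f n.+1 = rcons (mkseq f n) (f n).
Proof. by rewrite /mkseq -addn1 iotaD map_cat /= cats1 add0n. Qed.

Lemma ext_S E fuel acc : ext E fuel.+1 acc =
  flatten [seq (if pok E (rcons acc c) then ext E fuel (rcons acc c) else [::])
            | c <- size acc :: [seq j <- iota 0 (size acc) | nth 0 acc j == j]].
Proof. by []. Qed.

Lemma ext_complete E k (f : nat -> nat) :
  (forall i, i < k -> f i <= i /\ f (f i) = f i) ->
  (forall e, e \in E -> emax e < k -> colok (mkseq f k) e) ->
  mkseq f k \in ext E k [::].
Proof.
move=> Hf HE.
suff: forall fuel i, i + fuel = k -> mkseq f k \in ext E fuel (mkseq f i).
  by move/(_ k 0 erefl).
elim=> [|fuel IH] i Hi.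
  by rewrite addn0 in Hi; rewrite Hi /= inE.
have ik : i < k by rewrite -Hi addnS ltnS leq_addr.
rewrite ext_S.
apply/flatten_mapP; exists (f i).
  rewrite size_mkseq inE.
  have [fi_le fifi] := Hf i ik.
  rewrite leq_eqVlt in fi_le; case/orP: fi_le => [/eqP ->|lt]; first by rewrite eqxx.
  apply/orP; right; rewrite mem_filter mem_iota lt /= nth_mkseq //.
  by rewrite fifi eqxx.
rewrite -mkseqS'.
have -> : pok E (mkseq f i.+1).
  apply/allP=> e eE; apply/implyP; rewrite size_mkseq => emx.
  have := HE e eE (leq_trans emx ik).
  move: emx; rewrite /colok /emax !gtn_max => /and3P [h1 h2 h3].
  rewrite !nth_mkseq //; by apply: leq_trans ik.
apply: IH; by rewrite addSnnS.
Qed.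

Section Canon.
Variable U : eqType.
Variable H : nat -> U.
Variable k : nat.
Definition cf (i : nat) : nat := find (fun j => H j == H i) (iota 0 k).

Lemma cf_lt i : i < k -> cf i <= i.
Proof.
move=> ik; rewrite /cf.
case: (leqP (find (fun j => H j == H i) (iota 0 k)) i) => // lt.
have := before_find 0 lt; by rewrite nth_iota // add0n eqxx.
Qed.

Lemma cf_spec i : i < k -> H (cf i) = H i.
Proof.
move=> ik; have hs : has (fun j => H j == H i) (iota 0 k).
  by apply/hasP; exists i; rewrite ?mem_iota //.
have lt : cf i < k by have := hs; rewrite has_find size_iota.
by have := nth_find 0 hs; rewrite -/(cf i) nth_iota ?add0n // => /eqP.
Qed.

Lemma cf_eq i l : i < k -> l < k -> (cf i == cf l) = (H i == H l).
Proof.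
move=> ik lk; apply/eqP/eqP=> [e|e].
  by rewrite -cf_spec // e cf_spec.
by rewrite /cf e.
Qed.

Lemma cf_idem i : i < k -> cf (cf i) = cf i.
Proof.
move=> ik; have ck : cf i < k by apply: leq_ltn_trans (cf_lt ik) ik.
by apply/eqP; rewrite cf_eq // cf_spec.
Qed.
End Canon.

Lemma tv_eqpat {T1 T2 : eqType} (a b c : T1) (x y z : T2) :
  (a == b) = (x == y) -> (b == c) = (y == z) -> (a == c) = (x == z) -> tv a b c = tv x y z.
Proof. by rewrite /tv => -> -> ->. Qed.

Lemma medges_lt vs e : 8 <= size vs -> e \in medges vs -> emax e < size vs.
Proof.
move=> s8; rewrite inE => /orP [/eqP -> | ]; first by rewrite /emax; apply: leq_trans s8.
rewrite mem_filter => /andP [_ /allpairsP [[[i j] l] [/allpairsP [[i' j'] [ii jj ->]] ll ->]]] /=.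
by rewrite /emax /= !gtn_max; rewrite !mem_iota /= in ii jj ll; rewrite ii jj ll.
Qed.

Definition m0H {U : eqType} (H : nat -> U) : nat :=
  if H 1 == H 3 then 2 else if H 5 == H 7 then 1 else 0.

Lemma cfg_sound vs (U : eqType) (H : nat -> U) :
  cfg_check vs ->
  (forall e, e \in medges vs -> tv (H e.1.1) (H e.1.2) (H e.2)) ->
  forall i l, i < size vs -> l < size vs ->
  (H i == H l) = (nth 0 (nth [::] vs i) (m0H H) == nth 0 (nth [::] vs l) (m0H H)).
Proof.
move=> /andP [tk /allP Hall] HE i l ik lk.
have s8 : 8 <= size vs.
  case: (leqP 8 (size vs)) => lt8; first exact: isT.
  move: tk; rewrite take_oversize; last exact: ltnW.
  move=> /eqP e; move: lt8; rewrite e; exact: id.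
set k := size vs.
set g := cf H k.
have Hin : mkseq g k \in ext (medges vs) k [::].
  apply: ext_complete.
    by move=> j jk; split; [apply: cf_lt | apply: cf_idem].
  move=> e eE emx; rewrite /colok.
  move: (emx); rewrite /emax !gtn_max => /and3P [h1 h2 h3].
  rewrite !nth_mkseq //.
  rewrite /tv !cf_eq //; exact: HE.
have := Hall _ Hin.
have -> : m0f (mkseq g k) = m0H H.
  rewrite /m0f /m0H !nth_mkseq ?cf_eq //; by apply: leq_trans s8.
move=> /allP /(_ i); rewrite mem_iota ik => /(_ isT) /allP /(_ l); rewrite mem_iota lk.
by move=> /(_ isT) /eqP <-; rewrite !nth_mkseq // cf_eq.
Qed.

Lemma tv_of (U : eqType) (a b c : U) :
  (a == b) || (b == c) || (a == c) -> ~~ ((a == b) && (b == c)) -> tv a b c.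
Proof.
rewrite /tv; case: (eqVneq a b) => ab; case: (eqVneq b c) => bc; case: (eqVneq a c) => ac //=.
all: first [subst; by rewrite ?eqxx in ac bc ab * | idtac].
all: try by move: ab; rewrite ac bc eqxx.
by move: bc; rewrite -ab ac eqxx.
Qed.

Lemma tv_all (U : eqType) (a b c : U) : tv a b c -> ~~ ((a == b) && (b == c)).
Proof. by rewrite /tv; case: (eqVneq a b) => ab; case: (eqVneq b c) => bc; case: (eqVneq a c) => ac. Qed.

Lemma tr3 (U : eqType) (p q s : U) :
  [/\ (p == q) && (q == s) ==> (p == s), (p == q) && (p == s) ==> (q == s)
    & (q == s) && (p == s) ==> (p == q)].
Proof.
split; apply/implyP => /andP [/eqP e1 /eqP e2]; apply/eqP.
- by rewrite e1 e2.
- by rewrite -e1 e2.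
- by rewrite e2 -e1.
Qed.

Lemma card3 (T : finType) (p q s : T) : (#|[set p; q; s]| == 2) = tv p q s.
Proof.
rewrite -setUA !cardsU1 cards1 !inE /tv.
case: (tr3 p q s); case: (p == q); case: (q == s); case: (p == s) => //.
Qed.

Lemma card3d (T : finType) (p q s : T) : p != q -> q != s -> p != s -> #|[set p; q; s]| = 3.
Proof. by move=> pq qs ps; rewrite -setUA !cardsU1 cards1 !inE (negbTE pq) (negbTE ps) (negbTE qs). Qed.

Lemma imset3 (T : finType) (U : finType) (f : T -> U) (p q s : T) :
  [set f x | x in [set p; q; s]] = [set f p; f q; f s].
Proof. by rewrite !imsetU !imset_set1. Qed.

Lemma strict3 (T : finType) (U : eqType) (h : T -> U) (u v w : T) :
  [exists x in [set u; v; w], exists y in [set u; v; w], (x != y) && (h x == h y)] &&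
  [exists x in [set u; v; w], exists y in [set u; v; w], h x != h y] -> tv (h u) (h v) (h w).
Proof.
case/andP => /existsP [x /andP [xE /existsP [y /andP [yE /andP [nxy hxy]]]]].
move=> /existsP [x' /andP [xE' /existsP [y' /andP [yE' hxy']]]].
apply: tv_of.
  move: xE yE nxy hxy; rewrite !inE -!orbA.
  by case/or3P=> /eqP ->; case/or3P=> /eqP ->; rewrite ?eqxx //= => _ /eqP e;
     rewrite e eqxx ?orbT.
apply/negP=> /andP [/eqP e1 /eqP e2]; move: hxy'.
move: xE' yE'; rewrite !inE -!orbA.
by case/or3P=> /eqP ->; case/or3P=> /eqP ->; rewrite ?e1 ?e2 eqxx.
Qed.

Section Main.
Variables n1 n2 n3 : nat.
Hypothesis h12 : n2 < n1.
Hypothesis h23 : n3 < n2.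
Hypothesis h3 : 2 <= n3.

Definition at0 := [:: 1; n3; n2; n1].
Definition real (ats q : seq nat) : vec4 n1 :=
  mkv n1 [:: nth 0 ats (nth 0 q 0); nth 0 ats (nth 0 q 1); nth 0 ats (nth 0 q 2); nth 0 q 3].

Lemma mkvE s (j : 'I_4) : nth 0 s j <= n1 -> (mkv n1 s j : nat) = nth 0 s j.
Proof. by move=> h; rewrite /mkv ffunE inordK // ltnS. Qed.

Lemma inX (s : seq nat) : s \in Xlist n1 n2 n3 -> mkv n1 s \in Hvert n1 n2 n3.
Proof. by move=> h; rewrite inE; apply: map_f. Qed.

Lemma memA j : 1 <= j <= n3 -> [:: j; j; j; 0] \in Xlist n1 n2 n3.
Proof. move=> h; rewrite /Xlist !mem_cat; apply/orP; left; apply/mapP; exists j => //; rewrite mem_iota; lia. Qed.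
Lemma memB j : 1 <= j <= n3 -> [:: j; j; j; 1] \in Xlist n1 n2 n3.
Proof. move=> h; rewrite /Xlist !mem_cat; do 1 (apply/orP; right); apply/orP; left; apply/mapP; exists j => //; rewrite mem_iota; lia. Qed.
Lemma memC a : n3 <= a < n2 -> [:: a; a; 1; 0] \in Xlist n1 n2 n3.
Proof. move=> h; rewrite /Xlist !mem_cat; do 2 (apply/orP; right); apply/orP; left; apply/mapP; exists (a - n3); [rewrite mem_iota; lia | by rewrite subnKC //; lia]. Qed.
Lemma memD a : n3 <= a < n2 -> [:: a; a; n3; 1] \in Xlist n1 n2 n3.
Proof. move=> h; rewrite /Xlist !mem_cat; do 3 (apply/orP; right); apply/orP; left; apply/mapP; exists (a - n3); [rewrite mem_iota; lia | by rewrite subnKC //; lia]. Qed.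
Lemma memE a : n2 <= a < n1 -> [:: a; 1; 1; 0] \in Xlist n1 n2 n3.
Proof. move=> h; rewrite /Xlist !mem_cat; do 4 (apply/orP; right); apply/orP; left; apply/mapP; exists (a - n2); [rewrite mem_iota; lia | by rewrite subnKC //; lia]. Qed.
Lemma memF a : n2 <= a < n1 -> [:: a; n2; n3; 1] \in Xlist n1 n2 n3.
Proof. move=> h; rewrite /Xlist !mem_cat; do 5 (apply/orP; right); apply/orP; left; apply/mapP; exists (a - n2); [rewrite mem_iota; lia | by rewrite subnKC //; lia]. Qed.
Lemma memG : [:: n1; n2; n3; 1] \in Xlist n1 n2 n3.
Proof. by rewrite /Xlist !mem_cat !inE eqxx !orbT. Qed.

Lemma K8_in i : i < 8 -> real at0 (nth [::] K8 i) \in Hvert n1 n2 n3.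
Proof.
case: i => [|[|[|[|[|[|[|[|i]]]]]]]] // _; rewrite /real /=; apply: inX.
- apply: memB; lia.
- apply: memA; lia.
- apply: memB; lia.
- apply: memC; lia.
- apply: memA; lia.
- apply: memF; lia.
- apply: memE; lia.
- exact: memG.
Qed.

Definition cls_ok c a :=
  match c with
  | CI => (2 <= a) && (a < n3)
  | CII => (n3 < a) && (a < n2)
  | CIII => (n2 < a) && (a < n1)
  end.

Definition PQf c a : seq (seq nat) :=
  match c with
  | CI => [:: [:: a;a;a;1]; [:: a;a;a;0]]
  | CII => [:: [:: a;a;n3;1]; [:: a;a;1;0]]
  | CIII => [:: [:: a;n2;n3;1]; [:: a;1;1;0]]
  end.

Lemma realPQ r p c a b : nth 0 (at0 ++ r) p = a -> b < 2 ->
  real (at0 ++ r) (nth [::] (PQ c p) b) = mkv n1 (nth [::] (PQf c a) b).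
Proof. by move=> e; case: c; case: b => [|[|b]] //= _; rewrite /real /= e. Qed.

Lemma realK8 r i : i < 8 -> real (at0 ++ r) (nth [::] K8 i) = real at0 (nth [::] K8 i).
Proof. by case: i => [|[|[|[|[|[|[|[|i]]]]]]]]. Qed.

Lemma cls_in c a b : cls_ok c a -> b < 2 -> mkv n1 (nth [::] (PQf c a) b) \in Hvert n1 n2 n3.
Proof.
case: c => /= /andP [l1 l2]; case: b => [|[|b]] // _; apply: inX.
- apply: memB; lia.
- apply: memA; lia.
- apply: memD; lia.
- apply: memC; lia.
- apply: memF; lia.
- apply: memE; lia.
Qed.

Lemma classify x : x \in Hvert n1 n2 n3 ->
  (exists2 i, i < 8 & x = real at0 (nth [::] K8 i)) \/
  (exists c a b, [/\ cls_ok c a, b < 2 & x = mkv n1 (nth [::] (PQf c a) b)]).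
Proof.
rewrite inE => /mapP [s sX ->{x}].
rewrite /Xlist !mem_cat in sX.
case/or4P: sX => [|||/or4P [|||]] /=.
- case/mapP=> j; rewrite mem_iota => jr ->.
  have [->|j1] := eqVneq j 1; first by left; exists 1.
  have [->|jn] := eqVneq j n3; first by left; exists 4.
  by right; exists CI, j, 1; split=> //=; lia.
- case/mapP=> j; rewrite mem_iota => jr ->.
  have [->|j1] := eqVneq j 1; first by left; exists 0.
  have [->|jn] := eqVneq j n3; first by left; exists 2.
  by right; exists CI, j, 0; split=> //=; lia.
- case/mapP=> k; rewrite mem_iota => kr ->.
  have [->|k0] := eqVneq k 0; first by left; exists 3 => //; rewrite addn0.
  by right; exists CII, (n3 + k), 1; split=> //=; lia.
- case/mapP=> k; rewrite mem_iota => kr ->.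
  have [->|k0] := eqVneq k 0; first by left; exists 2 => //; rewrite addn0.
  by right; exists CII, (n3 + k), 0; split=> //=; lia.
- case/mapP=> k; rewrite mem_iota => kr ->.
  have [->|k0] := eqVneq k 0; first by left; exists 6 => //; rewrite addn0.
  by right; exists CIII, (n2 + k), 1; split=> //=; lia.
- case/mapP=> k; rewrite mem_iota => kr ->.
  have [->|k0] := eqVneq k 0; first by left; exists 5 => //; rewrite addn0.
  by right; exists CIII, (n2 + k), 0; split=> //=; lia.
- by rewrite inE => /eqP ->; left; exists 7.
Qed.

Definition wfq na (q : seq nat) :=
  [&& size q == 4, nth 0 q 0 < na, nth 0 q 1 < na, nth 0 q 2 < na & nth 0 q 3 <= 1].
Definition wf na (vs : seq (seq nat)) := uniq vs && all (wfq na) vs.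

Lemma realeq ats q q' (c : 'I_4) : uniq ats -> all (fun v => v <= n1) ats ->
  wfq (size ats) q -> wfq (size ats) q' ->
  (real ats q c == real ats q' c) = (nth 0 q c == nth 0 q' c).
Proof.
move=> U A /and5P [_ a0 a1 a2 a3] /and5P [_ b0 b1 b2 b3].
have le i : i < size ats -> nth 0 ats i <= n1 by move=> hi; apply: (all_nthP 0 A).
have n14 : 1 < n1 by lia.
rewrite -val_eqE /real !ffunE.
case: c => [[|[|[|[|c]]]] //= _]; rewrite !inordK ?ltnS ?le //; try apply: leq_trans n14 => //.
- exact: nth_uniq.
- exact: nth_uniq.
- exact: nth_uniq.
- by apply: leq_trans b3 _; apply: ltnW.
- by apply: leq_trans a3 _; apply: ltnW.
Qed.

Lemma real_inj ats q q' : uniq ats -> all (fun v => v <= n1) ats ->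
  wfq (size ats) q -> wfq (size ats) q' -> real ats q = real ats q' -> q = q'.
Proof.
move=> U A wq wq' e.
have sq : size q = 4 by case/and5P: wq => /eqP.
have sq' : size q' = 4 by case/and5P: wq' => /eqP.
apply: (@eq_from_nth _ 0); first by rewrite sq sq'.
move=> i; rewrite sq => i4.
by have := realeq (Ordinal i4) U A wq wq'; rewrite e eqxx /= => /esym/eqP.
Qed.

Definition Q1r := mkv n1 [:: 1; 1; 1; 0].
Definition Qn3r := mkv n1 [:: n3; n3; 1; 0].
Definition Pn2r := mkv n1 [:: n2; n2; n3; 1].
Definition Pn1r := mkv n1 [:: n1; n2; n3; 1].

Definition mP (P : {set {set vec4 n1}}) : nat :=
  if pblock P Q1r == pblock P Qn3r then 2 else if pblock P Pn2r == pblock P Pn1r then 1 else 0.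

Section Cfg.
Variable P : {set {set vec4 n1}}.
Hypothesis HP : strict_coloring (Hvert n1 n2 n3) (Hedges n1 n2 n3) P.
Variable vs : seq (seq nat).
Variable r : seq nat.
Let ats := at0 ++ r.
Hypothesis Hc : cfg_check vs.
Hypothesis Hw : wf (size ats) vs.
Hypothesis Hu : uniq ats.
Hypothesis Ha : all (fun v => v <= n1) ats.
Hypothesis Hin : forall q, q \in vs -> real ats q \in Hvert n1 n2 n3.

Let g i := real ats (nth [::] vs i).

Lemma wf_nth i : i < size vs -> wfq (size ats) (nth [::] vs i).
Proof. by move=> hi; case/andP: Hw => _ /allP; apply; apply: mem_nth. Qed.

Lemma g_eq i j : i < size vs -> j < size vs -> (g i == g j) = (i == j).
Proof.
move=> hi hj; apply/eqP/eqP => [e|->] //.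
have := real_inj Hu Ha (wf_nth hi) (wf_nth hj) e.
by move/eqP; rewrite nth_uniq //; [move/eqP | case/andP: Hw].
Qed.

Lemma vsK i : i < 8 -> nth [::] vs i = nth [::] K8 i.
Proof. by move=> hi; case/andP: Hc => /eqP <- _; rewrite nth_take. Qed.

Lemma s8 : 8 <= size vs.
Proof.
case/andP: Hc => tk _.
case: (leqP 8 (size vs)) => lt8; first exact: isT.
move: tk; rewrite take_oversize; last exact: ltnW.
move=> /eqP e; move: lt8; rewrite e; exact: id.
Qed.

Lemma edge_tv e : e \in medges vs ->
  tv (pblock P (g e.1.1)) (pblock P (g e.1.2)) (pblock P (g e.2)).
Proof.
move=> eE; have := medges_lt s8 eE; rewrite /emax !gtn_max => /and3P [k1 k2 k3].
case/andP: HP => _ /forallP Hed.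
have EH : [set g e.1.1; g e.1.2; g e.2] \in Hedges n1 n2 n3; last first.
  by apply: strict3; have := Hed [set g e.1.1; g e.1.2; g e.2]; rewrite EH.
move: eE; rewrite inE => /orP [/eqP -> | ].
  rewrite /g /= !vsK //= /real /= in_setU; apply/orP; right; rewrite in_set1 //.
move=> Hm; rewrite mem_filter in Hm; case/andP: Hm => /andP [/andP [lt12 lt23] qk] _.
have d12 : e.1.1 != e.1.2 by rewrite neq_ltn lt12.
have d23 : e.1.2 != e.2 by rewrite neq_ltn lt23.
have d13 : e.1.1 != e.2 by rewrite neq_ltn (ltn_trans lt12 lt23).
rewrite in_setU; apply/orP; left; rewrite inE -andbA; apply/and3P; split.
- apply/subsetP => x Hx.
  have : ((x == g e.1.1) || (x == g e.1.2)) || (x == g e.2) by move: Hx; rewrite !inE.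
  by case/orP => [/orP []|] /eqP ->; apply: Hin; exact: mem_nth.
- by rewrite card3d // g_eq.
- apply/forallP => c; rewrite imset3 card3 /tv !realeq ?wf_nth //.
  move/allP: qk => /(_ c); rewrite mem_iota /= ltn_ord => /(_ isT).
  by rewrite /tv.
Qed.

Lemma mP_lt : mP P < 3.
Proof. by rewrite /mP; case: ifP => //; case: ifP. Qed.

Lemma cfg_main i l : i < size vs -> l < size vs ->
  (pblock P (g i) == pblock P (g l)) = (g i (inord (mP P)) == g l (inord (mP P))).
Proof.
move=> hi hl.
have := @cfg_sound vs _ (fun i => pblock P (g i)) Hc edge_tv i l hi hl.
have -> : m0H (fun i => pblock P (g i)) = mP P.
  by rewrite /m0H /g !vsK.
move=> ->; rewrite /g realeq ?wf_nth // inordK //.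
by apply: leq_trans mP_lt _.
Qed.
End Cfg.

Lemma wf0 : wf (size at0) K8. Proof. by []. Qed.
Lemma wf1 c a : wf (size (at0 ++ [:: a])) (K8 ++ PQ c 4). Proof. by case: c. Qed.
Lemma wf2 c d a a' : wf (size (at0 ++ [:: a; a'])) (K8 ++ PQ c 4 ++ PQ d 5).
Proof. by case: c; case: d. Qed.

Definition isK8 (x : vec4 n1) := exists2 i, i < 8 & x = real at0 (nth [::] K8 i).
Definition isC c a (x : vec4 n1) := exists2 b, b < 2 & x = mkv n1 (nth [::] (PQf c a) b).

Lemma K8_inl q : q \in K8 -> real at0 q \in Hvert n1 n2 n3.
Proof. by case/(nthP [::]) => i hi <-; apply: K8_in. Qed.

Lemma size_PQ c p : size (PQ c p) = 2. Proof. by case: c. Qed.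

Section Res.
Variable P : {set {set vec4 n1}}.
Hypothesis HP : strict_coloring (Hvert n1 n2 n3) (Hedges n1 n2 n3) P.
Let m := (inord (mP P) : 'I_4).
Definition good (x y : vec4 n1) := (pblock P x == pblock P y) = (x m == y m).

Lemma conf0 x y : isK8 x -> isK8 y -> good x y.
Proof.
case=> i hi ->; case=> j hj ->.
have := @cfg_main P HP K8 [::] chk0; rewrite cats0 => /(_ wf0).
have U : uniq at0 by rewrite /= !inE; lia.
have A : all (fun v => v <= n1) at0 by rewrite /=; lia.
by move=> /(_ U A K8_inl i j hi hj).
Qed.

Lemma conf1 c a x y : cls_ok c a -> (isK8 x \/ isC c a x) -> (isK8 y \/ isC c a y) -> good x y.
Proof.
move=> ca.
have U : uniq (at0 ++ [:: a]) by case: c ca => /= ca; rewrite !inE; lia.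
have A : all (fun v => v <= n1) (at0 ++ [:: a]) by case: c ca => /= ca; lia.
set vs := K8 ++ PQ c 4.
have e4 : nth 0 (at0 ++ [:: a]) 4 = a by [].
have Hin : forall q, q \in vs -> real (at0 ++ [:: a]) q \in Hvert n1 n2 n3.
  move=> q; rewrite mem_cat => /orP [].
    by case/(nthP [::]) => i hi <-; rewrite realK8 //; apply: K8_in.
  case/(nthP [::]) => b; rewrite size_PQ => hb <-; rewrite (realPQ _ e4) //.
  exact: cls_in.
have M := @cfg_main P HP vs [:: a] (chk1 c) (wf1 c a) U A Hin.
have pos : forall z, isK8 z \/ isC c a z ->
    exists2 i, i < size vs & z = real (at0 ++ [:: a]) (nth [::] vs i).
  move=> z [[i hi ->]|[b hb ->]].
    by exists i; [rewrite size_cat; apply: leq_trans hi _; apply: leq_addr |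
                  rewrite nth_cat /= hi realK8].
  exists (8 + b); first by rewrite size_cat size_PQ /=; lia.
  by rewrite nth_cat /= addKn (realPQ _ e4).
case/pos => i hi ->; case/pos => j hj ->; exact: M.
Qed.

Lemma conf2 c d a a' x y : cls_ok c a -> cls_ok d a' -> a != a' -> isC c a x -> isC d a' y -> good x y.
Proof.
move=> ca da aa.
have U : uniq (at0 ++ [:: a; a']).
  by move: aa; case: c ca; case: d da => /= da ca aa; rewrite !inE; lia.
have A : all (fun v => v <= n1) (at0 ++ [:: a; a']).
  by case: c ca; case: d da => /= da ca; lia.
set vs := K8 ++ PQ c 4 ++ PQ d 5.
have e4 : nth 0 (at0 ++ [:: a; a']) 4 = a by [].
have e5 : nth 0 (at0 ++ [:: a; a']) 5 = a' by [].
have Hin : forall q, q \in vs -> real (at0 ++ [:: a; a']) q \in Hvert n1 n2 n3.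
  move=> q; rewrite !mem_cat => /orP [|/orP []].
  - by case/(nthP [::]) => i hi <-; rewrite realK8 //; apply: K8_in.
  - case/(nthP [::]) => b; rewrite size_PQ => hb <-; rewrite (realPQ _ e4) //.
    exact: cls_in.
  - case/(nthP [::]) => b; rewrite size_PQ => hb <-; rewrite (realPQ _ e5) //.
    exact: cls_in.
have M := @cfg_main P HP vs [:: a; a'] (chk2 c d) (wf2 c d a a') U A Hin.
case=> b hb ->; case=> b' hb' ->.
have -> : mkv n1 (nth [::] (PQf c a) b) = real (at0 ++ [:: a; a']) (nth [::] vs (8 + b)).
  by rewrite nth_cat /= addKn nth_cat size_PQ hb (realPQ _ e4).
have -> : mkv n1 (nth [::] (PQf d a') b') = real (at0 ++ [:: a; a']) (nth [::] vs (10 + b')).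
  rewrite nth_cat /=.
  have -> : 10 + b' - 8 = 2 + b' by lia.
  by rewrite nth_cat size_PQ ltnNge leq_addr /= addKn (realPQ _ e5).
apply: M; rewrite !size_cat !size_PQ /=; lia.
Qed.

Lemma cls_uniq c d a : cls_ok c a -> cls_ok d a -> c = d.
Proof. by case: c; case: d => //= h1 h2; lia. Qed.

Lemma classify' x : x \in Hvert n1 n2 n3 -> isK8 x \/ exists c a, cls_ok c a /\ isC c a x.
Proof.
case/classify => [//|[c [a [b [ca hb ->]]]]]; first by left.
by right; exists c, a; split => //; exists b.
Qed.

Lemma uniq_main x y : x \in Hvert n1 n2 n3 -> y \in Hvert n1 n2 n3 -> good x y.
Proof.
case/classify' => [kx|[c [a [ca cx]]]]; case/classify' => [ky|[d [a' [da dy]]]].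
- exact: conf0.
- by apply: (conf1 da); [left|right].
- by apply: (conf1 ca); [right|left].
- have [e|ne] := eqVneq a a'.
    subst a'; have cd := cls_uniq ca da; subst d.
    by apply: (conf1 ca); right.
  exact: (conf2 ca da ne).
Qed.
End Res.

Definition Cp (j : 'I_4) := preim_partition (fun x : vec4 n1 => x j) (Hvert n1 n2 n3).

Lemma preim_pblock (T : finType) (U : eqType) (f : T -> U) (D : {set T}) x y :
  x \in D -> y \in D ->
  (pblock (preim_partition f D) x == pblock (preim_partition f D) y) = (f x == f y).
Proof.
move=> xD yD.
have /and3P [/eqP cov ti _] := preim_partitionP f D.
rewrite eq_pblock ?cov //.
rewrite (@pblock_equivalence_partition _ (fun x y => f x == f y)) //.
by split=> // /eqP ->.
Qed.

Lemma strict_pblockE (P : {set {set vec4 n1}}) :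
  strict_coloring (Hvert n1 n2 n3) (Hedges n1 n2 n3) P ->
  P = Cp (inord (mP P)).
Proof.
move=> HP; have part : partition P (Hvert n1 n2 n3) by case/andP: HP.
rewrite -{1}(preim_partition_pblock part) /Cp /preim_partition /equivalence_partition.
apply: eq_in_imset => x xD; apply/setP => y; rewrite !inE.
apply: andb_id2l => yD.
have yD' : y \in Hvert n1 n2 n3 by rewrite inE.
exact: (uniq_main HP xD yD').
Qed.

Lemma strict_gen (D E : {set vec4 n1}) (f : vec4 n1 -> 'I_n1.+1) :
  E \subset D -> #|E| = 3 -> #|f @: E| = 2 ->
  [exists x in E, exists y in E, (x != y) && (pblock (preim_partition f D) x == pblock (preim_partition f D) y)] &&
  [exists x in E, exists y in E, pblock (preim_partition f D) x != pblock (preim_partition f D) y].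
Proof.
move=> /subsetP sED cE cI; apply/andP; split.
  case: (boolP [exists x in E, exists y in E, (x != y) && (f x == f y)]).
    case/existsP => x /andP [xE /existsP [y /andP [yE /andP [nxy fxy]]]].
    apply/existsP; exists x; rewrite xE; apply/existsP; exists y; rewrite yE nxy /=.
    by rewrite preim_pblock ?sED.
  move=> nex; have inj : {in E &, injective f}.
    move=> x y xE yE fe; apply/eqP; apply/negPn/negP => nxy; apply: (negP nex).
    apply/existsP; exists x; rewrite xE; apply/existsP; exists y; rewrite yE nxy fe eqxx.
    by [].
  by move: cI; rewrite card_in_imset // cE.
case: (boolP [exists x in E, exists y in E, f x != f y]).
  case/existsP => x /andP [xE /existsP [y /andP [yE fxy]]].
  apply/existsP; exists x; rewrite xE; apply/existsP; exists y; rewrite yE /=.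
  by rewrite preim_pblock ?sED.
move=> nex; exfalso.
have : 0 < #|E| by rewrite cE.
case/card_gt0P => x0 x0E.
have : f @: E \subset [set f x0].
  apply/subsetP => v /imsetP [x xE ->]; rewrite inE; apply/negPn/negP => nx.
  apply: (negP nex); apply/existsP; exists x; rewrite xE; apply/existsP; exists x0.
  by rewrite x0E.
by move/subset_leq_card; rewrite cI cards1.
Qed.

Lemma mkv_eq s t (c : 'I_4) : nth 0 s c <= n1 -> nth 0 t c <= n1 ->
  (mkv n1 s c == mkv n1 t c) = (nth 0 s c == nth 0 t c).
Proof. by move=> hs ht; rewrite -val_eqE /= !mkvE. Qed.

Definition Rr := mkv n1 [:: n3; n3; n3; 0].

Lemma strict_Cp (i : nat) : i < 3 ->
  strict_coloring (Hvert n1 n2 n3) (Hedges n1 n2 n3) (Cp (inord i)).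
Proof.
move=> i3; apply/andP; split; first exact: preim_partitionP.
apply/forallP => E; apply/implyP; rewrite in_setU => /orP [].
  rewrite inE -andbA => /and3P [sE /eqP cE /forallP cI].
  apply: strict_gen => //; exact/eqP.
rewrite in_set1 => /eqP ->.
have Q1in : Q1r \in Hvert n1 n2 n3 by apply: (K8_in (i := 1)).
have Qn3in : Qn3r \in Hvert n1 n2 n3 by apply: (K8_in (i := 3)).
have Rin : Rr \in Hvert n1 n2 n3 by apply: (K8_in (i := 4)).
have n3le : n3 <= n1 by lia.
have n1le : 1 <= n1 by lia.
have neq : forall u v : vec4 n1, forall c : 'I_4, u c != v c -> u != v.
  by move=> u v c; apply: contra => /eqP ->.
have c2 : (inord 2 : 'I_4) = 2 :> nat by rewrite inordK.
have c0 : (inord 0 : 'I_4) = 0 :> nat by rewrite inordK.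
have QR : Qn3r != Rr.
  apply: (neq _ _ (inord 2)); rewrite mkv_eq c2 //=; lia.
have QQ : Q1r != Qn3r.
  apply: (neq _ _ (inord 0)); rewrite mkv_eq c0 //=; lia.
apply/andP; split; apply/existsP.
- case: i i3 => [|[|[|i]]] // _.
  + exists Qn3r; rewrite !inE eqxx orbT /=; apply/existsP; exists Rr.
    rewrite !inE eqxx orbT QR /= /Cp preim_pblock //.
    by rewrite /Qn3r /Rr mkv_eq ?inordK //=.
  + exists Qn3r; rewrite !inE eqxx orbT /=; apply/existsP; exists Rr.
    rewrite !inE eqxx orbT QR /= /Cp preim_pblock //.
    by rewrite /Qn3r /Rr mkv_eq ?inordK //=.
  + exists Q1r; rewrite !inE eqxx /=; apply/existsP; exists Qn3r.
    rewrite !inE eqxx orbT QQ /= /Cp preim_pblock //.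
    by rewrite /Q1r /Qn3r mkv_eq ?inordK //=.
- exists Q1r; rewrite !inE eqxx /=; apply/existsP.
  case: i i3 => [|[|[|i]]] // _.
  + exists Qn3r; rewrite !inE eqxx orbT /= /Cp preim_pblock //.
    rewrite /Q1r /Qn3r mkv_eq ?inordK //=; lia.
  + exists Qn3r; rewrite !inE eqxx orbT /= /Cp preim_pblock //.
    rewrite /Q1r /Qn3r mkv_eq ?inordK //=; lia.
  + exists Rr; rewrite !inE eqxx orbT /= /Cp preim_pblock //.
    rewrite /Q1r /Rr mkv_eq ?inordK //=; lia.
Qed.

Lemma card_preim (T U : finType) (f : T -> U) (D : {set T}) :
  #|preim_partition f D| = #|f @: D|.
Proof.
have -> : preim_partition f D = (fun v => [set y in D | f y == v]) @: (f @: D).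
  rewrite -imset_comp /preim_partition /equivalence_partition.
  apply: eq_imset => x /=; apply/setP => y; rewrite !inE eq_sym //.
apply: card_in_imset => v w /imsetP [x xD ->] _ e.
have : x \in [set y in D | f y == f x] by rewrite inE xD eqxx.
by rewrite e inE => /andP [_ /eqP].
Qed.

Definition nj (i : nat) := nth 0 [:: n1; n2; n3] i.

Lemma mkvE' s i : i < 4 -> nth 0 s i <= n1 -> (mkv n1 s (inord i) : nat) = nth 0 s i.
Proof. by move=> i4 h; rewrite /mkv ffunE inordK // inordK // ltnS. Qed.

Definition cdn (x : vec4 n1) (i : nat) : nat := x (inord i).

Lemma mkvE2 (x : vec4 n1) s i : x = mkv n1 s -> i < 4 -> nth 0 s i <= n1 ->
  cdn x i = nth 0 s i.
Proof. by move=> -> i4 h; rewrite /cdn mkvE' //. Qed.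

Lemma bounds (x : vec4 n1) (i : nat) : x \in Hvert n1 n2 n3 -> i < 3 ->
  0 < cdn x i <= nj i.
Proof.
move=> xD i3.
have n3le : n3 <= n1 by lia.
case/classify: xD => [[k hk exx]|[c [a [b [ca hb exx]]]]].
- rewrite /real in exx. have i4 : i < 4 by lia.
  have e := mkvE2 (i:=i) exx i4. rewrite e {e}; last first.
    by case: k hk {exx} => [|[|[|[|[|[|[|[|k]]]]]]]] // _; case: i i3 i4 => [|[|[|i]]] //= _ _; lia.
  by case: k hk {exx} => [|[|[|[|[|[|[|[|k]]]]]]]] // _; case: i i3 i4 => [|[|[|i]]] //= _ _; rewrite /nj /=; lia.
- have i4 : i < 4 by lia.
  have e := mkvE2 (i:=i) exx i4. rewrite e {e}; last first.
    by case: c ca {exx}; case: b hb => [|[|b]] //= _ ca; case: i i3 i4 => [|[|[|i]]] //= _ _; lia.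
  by case: c ca {exx}; case: b hb => [|[|b]] //= _ ca; case: i i3 i4 => [|[|[|i]]] //= _ _; rewrite /nj /=; lia.
Qed.

Definition W v := mkv n1 [:: v; minn v n2; minn v n3; 1].

Lemma W_in v : 0 < v <= n1 -> W v \in Hvert n1 n2 n3.
Proof.
move=> hv; rewrite /W; apply: inX.
case: (leqP v n3) => h1.
  have e1 : minn v n2 = v by lia.
  have e2 : minn v n3 = v by lia.
  rewrite ?e1 ?e2; apply: memB; lia.
case: (ltnP v n2) => h2.
  have e1 : minn v n2 = v by lia.
  have e2 : minn v n3 = n3 by lia.
  rewrite ?e1 ?e2; apply: memD; lia.
have e1 : minn v n2 = n2 by lia.
have e2 : minn v n3 = n3 by lia.
rewrite ?e1 ?e2.
case: (ltnP v n1) => h4; first by apply: memF; lia.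
have -> : v = n1 by lia.
exact: memG.
Qed.

Lemma coord_img (x : vec4 n1) i : x \in Hvert n1 n2 n3 -> i < 3 ->
  exists k : 'I_(nj i), x (inord i) = inord k.+1.
Proof.
move=> xD i3; have := bounds xD i3 => /andP [b1 b2].
have kl : (cdn x i).-1 < nj i by lia.
exists (Ordinal kl); apply: val_inj; rewrite /= inordK prednK //.
have : nj i <= n1 by case: i i3 {b1 b2 kl} => [|[|[|i]]] //= _; rewrite /nj /=; lia.
lia.
Qed.

Lemma W_coord i (k : 'I_(nj i)) : i < 3 -> (W k.+1) (inord i) = inord k.+1.
Proof.
move=> i3; have kl := ltn_ord k.
have njle : nj i <= n1 by case: i i3 k kl => [|[|[|i]]] //= _; rewrite /nj /=; lia.
have i4 : i < 4 by lia.
have le : nth 0 [:: k.+1; minn k.+1 n2; minn k.+1 n3; 1] i <= n1.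
  by case: i i3 k kl njle {i4} => [|[|[|i]]] //= _ k kl; rewrite /nj /=; lia.
have e := @mkvE2 (W k.+1) _ i (erefl _) i4 le.
apply: val_inj; change (cdn (W k.+1) i = (inord k.+1 : 'I_n1.+1) :> nat).
rewrite e inordK; last by lia.
by case: i i3 k kl njle {i4 le e} => [|[|[|i]]] //= _ k; rewrite /nj /= => kl h; lia.
Qed.

Lemma card_Cp (i : nat) : i < 3 -> #|Cp (inord i)| = nj i.
Proof.
move=> i3; rewrite /Cp card_preim.
have njle : nj i <= n1 by case: i i3 => [|[|[|i]]] //= _; rewrite /nj /=; lia.
have -> : [set (x : vec4 n1) (inord i : 'I_4) | x in Hvert n1 n2 n3] =
          [set (inord k.+1 : 'I_n1.+1) | k : 'I_(nj i)].
  apply/setP => v; apply/imsetP/imsetP.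
    case=> x xD ->; case: (coord_img xD i3) => k e; by exists k.
  case=> k _ ->; exists (W k.+1); last by rewrite W_coord.
  apply: W_in; have := ltn_ord k; lia.
rewrite card_imset ?card_ord //.
move=> k l /(congr1 val) /=; rewrite !inordK; try (have := ltn_ord k; have := ltn_ord l; lia).
by move=> [] /val_inj.
Qed.

Lemma strict_char (P : {set {set vec4 n1}}) :
  strict_coloring (Hvert n1 n2 n3) (Hedges n1 n2 n3) P -> exists2 i, i < 3 & P = Cp (inord i).
Proof.
move=> HP; exists (mP P); last exact: strict_pblockE.
by rewrite /mP; case: ifP => //; case: ifP.
Qed.

Lemma num_single k i0 : i0 < 3 -> nj i0 = k ->
  [set P | strict_coloring (Hvert n1 n2 n3) (Hedges n1 n2 n3) P && (#|P| == k)] = [set Cp (inord i0)].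
Proof.
move=> i03 e; apply/setP => P; rewrite !inE; apply/idP/eqP.
  case/andP => sP /eqP cP; have [i i3 eP] := strict_char sP.
  move: cP; rewrite eP card_Cp // -e => ei; congr (Cp (inord _)).
  move: ei; case: i i3 {eP} => [|[|[|i]]] //= _; case: i0 i03 {e} => [|[|[|i0]]] //= _;
    rewrite /nj /=; lia.
by move=> ->; rewrite strict_Cp //= card_Cp // e eqxx.
Qed.

Lemma num_none k : k != n1 -> k != n2 -> k != n3 ->
  [set P | strict_coloring (Hvert n1 n2 n3) (Hedges n1 n2 n3) P && (#|P| == k)] = set0.
Proof.
move=> k1 k2 k3; apply/setP => P; rewrite !inE; apply/negP => /andP [sP /eqP cP].
have [i i3 eP] := strict_char sP; move: cP; rewrite eP card_Cp //.
by case: i i3 {eP} => [|[|[|i]]] //= _; rewrite /nj /= => e; move: k1 k2 k3; rewrite -e eqxx.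
Qed.

Lemma final : one_realization (Hvert n1 n2 n3) (Hedges n1 n2 n3) [:: n1; n2; n3].
Proof.
have H : forall k, num_strict_colorings (Hvert n1 n2 n3) (Hedges n1 n2 n3) k =
                   ((k == n1) || (k == n2) || (k == n3)).
  move=> k; rewrite /num_strict_colorings.
  case: (eqVneq k n1) => [->|k1]; first by rewrite (@num_single n1 0) // cards1.
  case: (eqVneq k n2) => [->|k2]; first by rewrite (@num_single n2 1) // cards1.
  case: (eqVneq k n3) => [->|k3]; first by rewrite (@num_single n3 2) // cards1.
  by rewrite num_none // cards0.
split => k; rewrite H.
  by rewrite !inE; case: (k == n1); case: (k == n2); case: (k == n3).
by case: (k == n1); case: (k == n2); case: (k == n3).
Qed.
End Main.

Theorem lemma2p3 (n1 n2 n3 : nat) :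
  n1 > n2 -> n2 > n3 -> n3 >= 2 ->
  one_realization (Hvert n1 n2 n3) (Hedges n1 n2 n3) [:: n1; n2; n3].
Proof. by move=> h12 h23 h3; apply: final. Qed.
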